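(* Let $X$ be a set and $B$ a ternary relation on $X$. Then $(X,B)$ is $\mathbf{S}_0$-separated if and only if $B$ satisfies: (1) $B(x,x,y)$ and $B(x,y,y)$ for all $x,y\in X$; (2) $B(u,x,v)\wedge B(u,y,v)\wedge B(x,z,y)\implies B(u,z,v)$ for all $u,v,x,y,z\in X$; (3) $B(x,y,x)\wedge B(y,x,y)\implies x=y$ for all $x,y\in X$. Moreover, if $(X,B)$ is a betweenness structure then for every $a,b\in X$ the set $[a,b]=\{x\in X:B(a,x,b)\}$ is convex.
   Context: $\mathbf{S}_0=(\{0,1\},\beta)$ where $\beta(x,y,z)$ holds iff ($x=z=1\implies y=1$). A structure $(X,B)$ is $\mathbf{S}_0$-separated if it embeds (injective map preserving and reflecting the relation) into some power of $\mathbf{S}_0$; an $\mathbf{S}_0$-separated structure is called a betweenness structure. A subset $G$ of $(X,B)$ is convex if for all $a,b\in G$ and $x\in X$, $B(a,x,b)$ implies $x\in G$. *)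

(* Defs.v *)
Definition beta (x y z : bool) : Prop := (x = true /\ z = true) -> y = true.

Definition beta_pow (I : Type) (x y z : I -> bool) : Prop :=
  forall i : I, beta (x i) (y i) (z i).

Definition S0_separated (X : Type) (B : X -> X -> X -> Prop) : Prop :=
  exists (I : Type) (f : X -> I -> bool),
    (forall x y : X, f x = f y -> x = y) /\
    (forall x y z : X, B x y z <-> beta_pow I (f x) (f y) (f z)).

Definition betweenness_structure (X : Type) (B : X -> X -> X -> Prop) : Prop :=
  S0_separated X B.

Definition convex (X : Type) (B : X -> X -> X -> Prop) (G : X -> Prop) : Prop :=
  forall a b x : X, G a -> G b -> B a x b -> G x.

Definition interval (X : Type) (B : X -> X -> X -> Prop) (a b : X) : X -> Prop :=
  fun x => B a x b.

(* Main.v *)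
Require Import Defs.
From Stdlib Require Import ClassicalEpsilon FunctionalExtensionality Bool.

Lemma fwd (X : Type) (B : X -> X -> X -> Prop) : S0_separated X B ->
    ((forall x y : X, B x x y /\ B x y y) /\
     (forall u v x y z : X, B u x v -> B u y v -> B x z y -> B u z v) /\
     (forall x y : X, B x y x -> B y x y -> x = y)).
Proof.
  intros [I [f [Hinj HB]]]. split; [|split].
  - intros x y; split; apply HB; intros i [H1 H2]; assumption.
  - intros u v x y z H1 H2 H3. apply HB in H1, H2, H3. apply HB.
    intros i Hi. apply H3. split; [apply H1|apply H2]; exact Hi.
  - intros x y H1 H2. apply HB in H1, H2. apply Hinj.
    apply functional_extensionality. intros i.
    specialize (H1 i); specialize (H2 i); unfold beta in *.
    destruct (f x i), (f y i); auto.
    all: try (symmetry; apply H1; auto); try (apply H2; auto).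
Qed.

Definition cvx (X : Type) (B : X -> X -> X -> Prop) := { S : X -> Prop | convex X B S }.

Lemma bwd (X : Type) (B : X -> X -> X -> Prop) :
    ((forall x y : X, B x x y /\ B x y y) /\
     (forall u v x y z : X, B u x v -> B u y v -> B x z y -> B u z v) /\
     (forall x y : X, B x y x -> B y x y -> x = y)) -> S0_separated X B.
Proof.
  intros [H1 [H2 H3]].
  assert (Hc : forall a b, convex X B (interval X B a b)).
  { intros a b u v w Hu Hv Hw. unfold interval in *. exact (H2 _ _ _ _ _ Hu Hv Hw). }
  exists (cvx X B).
  exists (fun x S => if excluded_middle_informative (proj1_sig S x) then true else false).
  split.
  - intros x y Hf.
    assert (Hxy : forall a b, B a x b <-> B a y b).
    { intros a b.
      pose proof (equal_f Hf (exist _ (interval X B a b) (Hc a b))) as E. simpl in E.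
      unfold interval in E.
      destruct (excluded_middle_informative (B a x b)), (excluded_middle_informative (B a y b));
        try discriminate; tauto. }
    apply H3.
    + apply Hxy. apply H1.
    + apply <- Hxy. apply H1.
  - intros x y z. split.
    + intros Hb [S HS] [Ex Ez]. simpl in *.
      destruct (excluded_middle_informative (S x)); [|discriminate].
      destruct (excluded_middle_informative (S z)); [|discriminate].
      destruct (excluded_middle_informative (S y)); [reflexivity|].
      exfalso; apply n; exact (HS _ _ _ s s0 Hb).
    + intros Hp. specialize (Hp (exist _ (interval X B x z) (Hc x z))).
      unfold beta in Hp; simpl in Hp. unfold interval in Hp.
      destruct (excluded_middle_informative (B x y z)); [assumption|].
      exfalso.
      destruct (excluded_middle_informative (B x x z)); [|exfalso; apply n0; apply H1].
      destruct (excluded_middle_informative (B x z z)); [|match goal with h : ~ B x z z |- _ => exfalso; apply h; apply H1 end].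
      discriminate (Hp (conj eq_refl eq_refl)).
Qed.

Theorem mainTheorem16 (X : Type) (B : X -> X -> X -> Prop) :
  (S0_separated X B <->
    ((forall x y : X, B x x y /\ B x y y) /\
     (forall u v x y z : X, B u x v -> B u y v -> B x z y -> B u z v) /\
     (forall x y : X, B x y x -> B y x y -> x = y))) /\
  (betweenness_structure X B ->
     forall a b : X, convex X B (interval X B a b)).
Proof.
  split.
  - split; [apply fwd | apply bwd].
  - intros H a b u v w Hu Hv Hw. apply fwd in H. destruct H as [_ [H2 _]].
    unfold interval in *. exact (H2 _ _ _ _ _ Hu Hv Hw).
Qed.
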